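(* Let $n\ge 1$ be an integer and $0<\gamma<1$. Then no root $\lambda$ of $D_a(\lambda)=\lambda^{2n-1}(\lambda-\gamma)^2-(1-\gamma)^2$ satisfies $|\lambda|>1$. *)

(* Defs.v *)
From mathcomp Require Import all_boot all_order all_algebra.
Set Implicit Arguments. Unset Strict Implicit. Unset Printing Implicit Defensive.
Import Order.TTheory GRing.Theory Num.Theory.
Local Open Scope ring_scope.

Definition Da (C : numClosedFieldType) (n : nat) (g : C) : {poly C} :=
  'X ^+ (2 * n - 1) * ('X - g%:P) ^+ 2 - ((1 - g) ^+ 2)%:P.

(* Main.v *)
Require Import Defs.
From mathcomp Require Import all_boot all_order all_algebra.
Import Order.TTheory GRing.Theory Num.Theory.
Local Open Scope ring_scope.

Theorem proposition2 (C : numClosedFieldType) (n : nat) (g : C) :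
  (1 <= n)%N -> g \is Num.real -> 0 < g -> g < 1 ->
  forall lam : C, root (Da n g) lam -> ~ (1 < `|lam|).
Proof.
move=> n1 gr g0 g1 lam /rootP; rewrite /Da hornerD hornerN hornerM !horner_exp hornerXsubC hornerX hornerC => /eqP; rewrite subr_eq0 => /eqP E.
move=> l1.
have h1g : 0 < 1 - g by rewrite subr_gt0.
have nE : `|lam| ^+ (2 * n - 1) * `|lam - g| ^+ 2 = (1 - g) ^+ 2.
  by rewrite -!normrX -normrM E normrX (gtr0_norm h1g).
have hd : 1 - g < `|lam - g|.
  apply: (lt_le_trans _ (lerB_dist lam g)).
  by rewrite (gtr0_norm g0) ltrBlDr subrK.
have hd2 : (1 - g) ^+ 2 < `|lam - g| ^+ 2 by rewrite ltrXn2r // ltW.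
have hk : 1 < `|lam| ^+ (2 * n - 1).
  by rewrite exprn_egt1 // -lt0n subn_gt0 (leq_trans _ (leq_mul (leqnn 2) n1)).
have hd0 : 0 < `|lam - g| ^+ 2 by apply: lt_trans hd2; rewrite exprn_gt0.
have := hk; rewrite -(ltr_pMl _ hd0) nE => /(lt_trans hd2).
by rewrite ltxx.
Qed.
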